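(* Let $n\geq 2$ be an integer, $b:=-n+i$, and let $D\subset\{0,1,\ldots,n^2\}$ be such that $\Delta:=D-D$ is sparse. If $\alpha=\sum_{j\ge1}\alpha_jb^{-j}$ with $\alpha_j\in\Delta$ for all $j$, then $$\underline{\dim}_B\big(C_{n,D}\cap(C_{n,D}+\alpha)\big)=\liminf_{k\to\infty}\frac{\log M_k(\alpha)}{k\log|b|},$$ where $M_k(\alpha):=\prod_{j=1}^k|D\cap(D+\alpha_j)|$.
   Context: $C_{n,D}$ is the attractor of $\{z\mapsto b^{-1}(z+d): d\in D\}$, i.e. $C_{n,D}=\{\sum_{j\ge1}d_jb^{-j}: d_j\in D\}$. $\underline{\dim}_B$ denotes lower box-counting dimension. $\Delta$ is called sparse if for all $\delta\neq\delta'$ in $\Delta$, $|\delta-\delta'|>2$ when $n\ge5$, and $|\delta-\delta'|>3$ when $n\in\{2,3,4\}$. *)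

(* Defs.v *)
From Stdlib Require Import Reals ZArith List Bool.
From Coquelicot Require Import Coquelicot.
Open Scope R_scope.

Definition base (n : nat) : C := (- INR n, 1)%R.

(* the complex number  sum_{j>=1} c_j b^{-j}  (c : nat -> Z, index 0 unused) *)
Definition digit_term (n : nat) (c : nat -> Z) (j : nat) : C :=
  Cmult (IZR (c (S j)), 0%R) (Cinv (pow_n (K := C_Ring) (base n) (S j))).

Definition expansion (n : nat) (c : nat -> Z) (z : C) : Prop :=
  is_series (digit_term n c) z.

Definition inDz (D : nat -> bool) (x : Z) : bool :=
  (0 <=? x)%Z && D (Z.to_nat x).

Definition CnD (n : nat) (D : nat -> bool) (z : C) : Prop :=
  exists d : nat -> nat, (forall j, (1 <= j)%nat -> D (d j) = true) /\
    expansion n (fun j => Z.of_nat (d j)) z.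

Definition in_Delta (D : nat -> bool) (x : Z) : Prop :=
  exists d d', D d = true /\ D d' = true /\ x = (Z.of_nat d - Z.of_nat d')%Z.

Definition sparse (n : nat) (D : nat -> bool) : Prop :=
  forall x y, in_Delta D x -> in_Delta D y -> x <> y ->
    if (5 <=? n)%nat then (2 < Z.abs (x - y))%Z else (3 < Z.abs (x - y))%Z.

(* |D ∩ (D + a)|, for D ⊂ {0,...,n^2} *)
Definition card_shift (n : nat) (D : nat -> bool) (a : Z) : nat :=
  length (filter (fun d => D d && inDz D (Z.of_nat d - a)%Z) (seq 0 (n * n + 1))).

Fixpoint Mk (n : nat) (D : nat -> bool) (a : nat -> Z) (k : nat) : nat :=
  match k with
  | O => 1%nat
  | S k' => (Mk n D a k' * card_shift n D (a k))%nat
  end.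

Definition covers_with (m : nat) (delta : R) (F : C -> Prop) : Prop :=
  exists U : nat -> C -> Prop,
    (forall i, (i < m)%nat -> forall x y, U i x -> U i y -> Cmod (Cminus x y) <= delta) /\
    (forall z, F z -> exists i, (i < m)%nat /\ U i z).

(* N_delta(F): smallest number of sets of diameter <= delta covering F (+oo if none) *)
Definition cover_number (F : C -> Prop) (delta : R) : Rbar :=
  Rbar_glb (fun x => exists m : nat, x = Finite (INR m) /\ covers_with m delta F).

Definition box_ratio (F : C -> Prop) (delta : R) : Rbar :=
  match cover_number F delta with
  | Finite r => Finite (ln r / (- ln delta))
  | other => other
  end.

(* liminf_{delta -> 0+} log N_delta(F) / (- log delta) *)
Definition lower_box_dim (F : C -> Prop) : Rbar :=
  Rbar_lub (fun y => exists eps, 0 < eps <= 1 /\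
    y = Rbar_glb (fun x => exists delta, 0 < delta < eps /\ x = box_ratio F delta)).

(* Main.v *)
Require Import Defs.
From Stdlib Require Import Reals ZArith List Bool.
From Coquelicot Require Import Coquelicot.
Open Scope R_scope.
From Stdlib Require Import Lra Lia ClassicalEpsilon Classical.
Import ListNotations.

Lemma base_neq0 n : base n <> 0%C.
Proof. unfold base. intro H. injection H. lra. Qed.

Definition bq n : C := Cinv (base n).

Lemma bq_r n : Cmult (base n) (bq n) = 1%C.
Proof. apply Cinv_r, base_neq0. Qed.

Definition cpow (x : C) (k : nat) : C := pow_n (K:=C_Ring) x k.

Lemma pow_n_C_S (x : C) k : cpow x (S k) = Cmult x (cpow x k).
Proof. reflexivity. Qed.

Lemma pow_n_neq0 n k : cpow (base n) k <> 0%C.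
Proof.
  induction k as [|k IH]; simpl.
  - intro H. injection H. lra.
  - intro H. change (Cmult (base n) (cpow (base n) k) = 0%C) in H.
    apply (f_equal Cmod) in H. rewrite Cmod_mult, Cmod_0 in H.
    apply Rmult_integral in H. destruct H as [H|H].
    + apply Cmod_eq_0 in H. now apply (base_neq0 n).
    + apply Cmod_eq_0 in H. auto.
Qed.

Lemma Cinv_mult' (x y : C) : x <> 0%C -> y <> 0%C -> Cinv (Cmult x y) = Cmult (Cinv x) (Cinv y).
Proof.
  intros Hx Hy.
  assert (Hxy : Cmult x y <> 0%C).
  { intro H. apply (f_equal Cmod) in H. rewrite Cmod_mult, Cmod_0 in H.
    apply Rmult_integral in H. destruct H as [H|H]; apply Cmod_eq_0 in H; auto. }
  transitivity (Cmult (Cinv (Cmult x y)) (Cmult (Cmult x (Cinv x)) (Cmult y (Cinv y)))).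
  { rewrite !Cinv_r by auto. ring. }
  transitivity (Cmult (Cmult (Cinv (Cmult x y)) (Cmult x y)) (Cmult (Cinv x) (Cinv y))).
  { ring. }
  rewrite Cinv_l by auto. ring.
Qed.

Lemma cpow_inv n k : Cinv (cpow (base n) k) = cpow (bq n) k.
Proof.
  induction k as [|k IH].
  - unfold cpow; simpl. change (Cinv (RtoC 1) = RtoC 1). unfold Cinv, RtoC; simpl. apply injective_projections; simpl; field.
  - rewrite !pow_n_C_S. rewrite Cinv_mult'. rewrite IH. reflexivity.
    apply base_neq0. apply pow_n_neq0.
Qed.

Lemma dt_eq n c j : digit_term n c j = Cmult (IZR (c (S j)), 0) (cpow (bq n) (S j)).
Proof. unfold digit_term. now rewrite cpow_inv. Qed.

Lemma shift1 n c z : expansion n c z ->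
  expansion n (fun j => c (S j)) (Cminus (Cmult (base n) z) (IZR (c 1%nat), 0)).
Proof.
  unfold expansion. intro H.
  assert (H1 : is_series (fun k => digit_term n c (S k)) (Cminus z (digit_term n c 0))).
  { apply is_series_incr_1.
    assert (E : z = Cplus (Cminus z (digit_term n c 0)) (digit_term n c 0)) by ring.
    rewrite E in H. exact H. }
  apply (is_series_scal (base n)) in H1.
  eapply is_series_ext; [|  replace (Cminus (Cmult (base n) z) (IZR (c 1%nat), 0)) with (scal (base n) (Cminus z (digit_term n c 0))); [exact H1|]].
  - intro j. change (Cmult (base n) (digit_term n c (S j)) = digit_term n (fun j0 => c (S j0)) j).
    rewrite !dt_eq. rewrite (pow_n_C_S (bq n) (S j)).
    transitivity (Cmult (Cmult (base n) (bq n)) (Cmult (IZR (c (S (S j))), 0) (cpow (bq n) (S j)))).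
    ring. rewrite bq_r. ring.
  - change (Cmult (base n) (Cminus z (digit_term n c 0)) = Cminus (Cmult (base n) z) (IZR (c 1%nat), 0)).
    rewrite dt_eq. simpl pow_n.
    change (Cmult (base n) (Cminus z (Cmult (IZR (c 1%nat), 0) (Cmult (bq n) 1%C))) = Cminus (Cmult (base n) z) (IZR (c 1%nat), 0)).
    transitivity (Cminus (Cmult (base n) z) (Cmult (Cmult (base n) (bq n)) (IZR (c 1%nat), 0))). ring.
    rewrite bq_r. ring.
Qed.

Lemma sqrt2_lt_2 : sqrt 2 < 2.
Proof.
  assert (E : sqrt (2 * 2) = 2) by (apply sqrt_square; lra).
  rewrite <- E at 2. apply sqrt_lt_1; lra.
Qed.

Lemma sum_n_front (a : nat -> C) K :
  sum_n a (S K) = Cplus (a O) (sum_n (fun j => a (S j)) K).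
Proof.
  induction K as [|K IH].
  - rewrite sum_Sn, !sum_O. reflexivity.
  - rewrite sum_Sn, IH, (sum_Sn (fun j => a (S j))).
    change (Cplus (Cplus (a 0%nat) (sum_n (fun j : nat => a (S j)) K)) (a (S (S K))) =
            Cplus (a 0%nat) (Cplus (sum_n (fun j : nat => a (S j)) K) (a (S (S K))))). ring.
Qed.

Lemma series_close (a : nat -> C) z : is_series a z ->
  forall eps, 0 < eps -> exists K, Cmod (Cminus z (sum_n a K)) < eps.
Proof.
  intros H eps Heps.
  assert (He2 : 0 < eps / 2) by lra.
  specialize (H _ (locally_ball z (mkposreal _ He2))).
  destruct H as [N HN]. exists N.
  specialize (HN N (le_n N)).
  apply C_NormedModule_mixin_compat2 in HN. simpl in HN.
  rewrite <- Cmod_opp.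
  assert (E : Copp (Cminus z (sum_n a N)) = minus (sum_n a N) z).
  { change (Copp (Cminus z (sum_n a N)) = Cminus (sum_n a N) z). ring. }
  rewrite E. pose proof sqrt2_lt_2. pose proof (sqrt_pos 2). eapply Rlt_le_trans; [exact HN|]. nra.
Qed.

Lemma GL n (P : C -> Prop) (A : Z -> Prop) :
  (forall z, (forall eps, 0 < eps -> exists w, P w /\ Cmod (Cminus z w) < eps) -> P z) ->
  P (RtoC 0) ->
  (forall c w, A c -> P w -> P (Cmult (Cplus (IZR c, 0) w) (bq n))) ->
  forall c z, (forall j, A (c (S j))) -> expansion n c z -> P z.
Proof.
  intros Hcl H0 Hinv.
  assert (Hpart : forall K c, (forall j, A (c (S j))) -> P (sum_n (digit_term n c) K)).
  { induction K as [|K IH]; intros c Hc.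
    - rewrite sum_O, dt_eq.
      replace (Cmult (IZR (c 1%nat), 0) (cpow (bq n) 1)) with
        (Cmult (Cplus (IZR (c 1%nat), 0) (RtoC 0)) (bq n)).
      apply Hinv; auto.
      unfold cpow; simpl. change (Cmult (Cplus (IZR (c 1%nat), 0) (RtoC 0)) (bq n) =
        Cmult (IZR (c 1%nat), 0) (Cmult (bq n) (RtoC 1))). ring.
    - rewrite sum_n_front.
      assert (E : sum_n (fun j => digit_term n c (S j)) K =
                  Cmult (sum_n (digit_term n (fun j => c (S j))) K) (bq n)).
      { rewrite <- (sum_n_mult_r (K:=C_Ring)). apply sum_n_ext. intro j.
        rewrite !dt_eq. change (Cmult (IZR (c (S (S j))), 0) (Cmult (bq n) (cpow (bq n) (S j))) =
          Cmult (Cmult (IZR (c (S (S j))), 0) (cpow (bq n) (S j))) (bq n)). ring. }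
      rewrite E, dt_eq.
      replace (Cplus (Cmult (IZR (c 1%nat), 0) (cpow (bq n) 1))
         (Cmult (sum_n (digit_term n (fun j : nat => c (S j))) K) (bq n)))
       with (Cmult (Cplus (IZR (c 1%nat), 0) (sum_n (digit_term n (fun j : nat => c (S j))) K)) (bq n)).
      { apply Hinv; auto. }
      unfold cpow; simpl. change (Cmult (Cplus (IZR (c 1%nat), 0) (sum_n (digit_term n (fun j : nat => c (S j))) K)) (bq n) =
        Cplus (Cmult (IZR (c 1%nat), 0) (Cmult (bq n) (RtoC 1))) (Cmult (sum_n (digit_term n (fun j : nat => c (S j))) K) (bq n))). ring. }
  intros c z Hc Hz. apply Hcl. intros eps Heps.
  destruct (series_close _ _ Hz eps Heps) as [K HK].
  exists (sum_n (digit_term n c) K). split; auto.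
Qed.

Lemma fst_le_Cmod (u : C) : Rabs (fst u) <= Cmod u.
Proof. pose proof (Rmax_Cmod u). pose proof (Rmax_l (Rabs (fst u)) (Rabs (snd u))). lra. Qed.
Lemma snd_le_Cmod (u : C) : Rabs (snd u) <= Cmod u.
Proof. pose proof (Rmax_Cmod u). pose proof (Rmax_r (Rabs (fst u)) (Rabs (snd u))). lra. Qed.

Lemma le_eps (a b : R) : (forall eps, 0 < eps -> a < b + eps) -> a <= b.
Proof. intro H. destruct (Rle_lt_dec a b); auto. specialize (H ((a - b)/2)). lra. Qed.

Lemma comp_step n (c : Z) (w : C) :
  fst (Cmult (Cplus (IZR c, 0) w) (bq n)) = (snd w - INR n * (IZR c + fst w)) / (INR n * INR n + 1) /\
  snd (Cmult (Cplus (IZR c, 0) w) (bq n)) = - (IZR c + fst w + INR n * snd w) / (INR n * INR n + 1).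
Proof.
  destruct w as [x y]. unfold bq, Cinv, base, Cmult, Cplus. simpl.
  assert (INR n * INR n + 1 <> 0) by (pose proof (pos_INR n); nra).
  split; field; nra.
Qed.

Definition Rect (be rho : R) (z : C) : Prop := Rabs (fst z) <= rho /\ Rabs (snd z) <= be.

Lemma div_bound a d m : 0 < d -> -(m*d) <= a <= m * d -> Rabs (a / d) <= m.
Proof.
  intros Hd [H1 H2]. apply Rabs_le. split.
  - apply (Rmult_le_reg_r d); auto. unfold Rdiv. rewrite Rmult_assoc, Rinv_l by lra. lra.
  - apply (Rmult_le_reg_r d); auto. unfold Rdiv. rewrite Rmult_assoc, Rinv_l by lra. lra.
Qed.

Lemma rect_bound n (be rho Cb : R) :
  0 <= be -> 0 <= rho ->
  be + INR n * (Cb + rho) <= rho * (INR n * INR n + 1) ->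
  Cb + rho + INR n * be <= be * (INR n * INR n + 1) ->
  forall c z, (forall j, Rabs (IZR (c (S j))) <= Cb) -> expansion n c z -> Rect be rho z.
Proof.
  intros Hbe Hrho H1 H2.
  apply (GL n (Rect be rho) (fun c => Rabs (IZR c) <= Cb)).
  - intros z Hz. split.
    + apply le_eps. intros eps Heps. destruct (Hz eps Heps) as [w [[Hw1 Hw2] Hd]].
      pose proof (fst_le_Cmod (Cminus z w)) as Hm.
      assert (Ez : fst (Cminus z w) = fst z - fst w) by (destruct z, w; simpl; ring).
      rewrite Ez in Hm.
      pose proof (Rabs_triang_inv (fst z) (fst w)). lra.
    + apply le_eps. intros eps Heps. destruct (Hz eps Heps) as [w [[Hw1 Hw2] Hd]].
      pose proof (snd_le_Cmod (Cminus z w)) as Hm.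
      assert (Ez : snd (Cminus z w) = snd z - snd w) by (destruct z, w; simpl; ring).
      rewrite Ez in Hm.
      pose proof (Rabs_triang_inv (snd z) (snd w)). lra.
  - unfold Rect. simpl. rewrite Rabs_R0. lra.
  - intros c w Hc [Hw1 Hw2]. destruct (comp_step n c w) as [E1 E2].
    unfold Rect. rewrite E1, E2. pose proof (pos_INR n) as HN.
    apply Rabs_le_between in Hc. apply Rabs_le_between in Hw1. apply Rabs_le_between in Hw2.
    split; apply div_bound; try nra.
Qed.

Lemma disc_bound n : (2 <= n)%nat ->
  forall c z, (forall j, Rabs (IZR (c (S j))) <= INR n * INR n) -> expansion n c z ->
  Cmod z <= INR n * INR n.
Proof.
  intros Hn.
  assert (HN : 2 <= INR n) by (apply (le_INR 2) in Hn; simpl in Hn; lra).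
  assert (Hr : 2 <= Cmod (base n)).
  { unfold Cmod, base. simpl. rewrite <- (sqrt_square 2) by lra. apply sqrt_le_1_alt. nra. }
  apply (GL n (fun z => Cmod z <= INR n * INR n) (fun c => Rabs (IZR c) <= INR n * INR n)).
  - intros z Hz. apply le_eps. intros eps Heps. destruct (Hz eps Heps) as [w [Hw Hd]].
    pose proof (Cmod_triangle w (Cminus z w)).
    assert (E : Cplus w (Cminus z w) = z) by ring. rewrite E in H. lra.
  - rewrite Cmod_0. nra.
  - intros c w Hc Hw. rewrite Cmod_mult. unfold bq. rewrite Cmod_inv by apply base_neq0.
    pose proof (Cmod_triangle (IZR c, 0) w).
    assert (Cmod (IZR c, 0) = Rabs (IZR c)) by apply Cmod_R.
    assert (0 <= Cmod (Cplus (IZR c, 0) w)) by apply Cmod_ge_0.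
    apply (Rmult_le_reg_r (Cmod (base n))). lra.
    rewrite Rmult_assoc, Rinv_l by lra. nra.
Qed.

Lemma zero_series n : forall c z, (forall j, c (S j) = 0%Z) -> expansion n c z -> z = RtoC 0.
Proof.
  apply (GL n (fun z => z = RtoC 0) (fun c => c = 0%Z)).
  - intros z Hz. apply Cmod_eq_0. apply Rle_antisym; [|apply Cmod_ge_0].
    apply le_eps. intros eps Heps. destruct (Hz eps Heps) as [w [Hw Hd]]. subst w.
    replace (Cminus z 0) with z in Hd by ring. lra.
  - reflexivity.
  - intros c w Hc Hw. subst. unfold RtoC. simpl.
    change (Cmult (Cplus (RtoC 0) (RtoC 0)) (bq n) = RtoC 0). ring.
Qed.

Lemma expansion_ext n c c' z : (forall j, c (S j) = c' (S j)) -> expansion n c z -> expansion n c' z.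
Proof.
  intros H. unfold expansion. apply is_series_ext. intro j. unfold digit_term. now rewrite H.
Qed.

Lemma expansion_eqz n c z z' : z = z' -> expansion n c z -> expansion n c z'.
Proof. intros ->; auto. Qed.

Lemma delta_absZ n D x : (forall d, D d = true -> (d <= n * n)%nat) -> in_Delta D x ->
  (Z.abs x <= Z.of_nat (n * n))%Z.
Proof.
  intros HD [d [d' [H1 [H2 ->]]]]. apply HD in H1. apply HD in H2. lia.
Qed.

Lemma INR_sq n : INR (n * n) = INR n * INR n.
Proof. apply mult_INR. Qed.

Definition DD (D : nat -> bool) (c : nat -> Z) : Prop :=
  forall j, exists x y, in_Delta D x /\ in_Delta D y /\ c (S j) = (x - y)%Z.

Lemma DD_bound n D c : (forall d, D d = true -> (d <= n * n)%nat) -> DD D c ->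
  forall j, Rabs (IZR (c (S j))) <= 2 * (INR n * INR n).
Proof.
  intros HD Hc j. destruct (Hc j) as [x [y [Hx [Hy E]]]]. rewrite E.
  apply delta_absZ with (n:=n) in Hx; auto. apply delta_absZ with (n:=n) in Hy; auto.
  rewrite <- abs_IZR, <- INR_sq, INR_IZR_INZ. rewrite <- (mult_IZR 2). apply IZR_le. lia.
Qed.

Lemma DD_shift D c : DD D c -> DD D (fun j => c (S j)).
Proof. intros H j. apply (H (S j)). Qed.

Lemma two_shift_vals n (E E2 : Z) :
  let g1 := Cminus (Cmult (base n) (RtoC 0)) (IZR E, 0) in
  let g2 := Cminus (Cmult (base n) g1) (IZR E2, 0) in
  fst g1 = - IZR E /\ snd g1 = 0 /\ fst g2 = INR n * IZR E - IZR E2 /\ snd g2 = - IZR E.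
Proof. unfold base, Cmult, Cminus, Cplus, Copp. simpl. repeat split; ring. Qed.

Lemma third_val n (g : C) (E3 : Z) : snd (Cminus (Cmult (base n) g) (IZR E3, 0)) = fst g - INR n * snd g.
Proof. destruct g. unfold base, Cmult, Cminus, Cplus, Copp. simpl. ring. Qed.

Lemma KL_step n D c : (2 <= n)%nat -> (forall d, D d = true -> (d <= n * n)%nat) -> sparse n D ->
  DD D c -> expansion n c (RtoC 0) -> c 1%nat = 0%Z /\ expansion n (fun j => c (S j)) (RtoC 0).
Proof.
  intros Hn HD Hsp Hc H0.
  pose proof (pos_INR n) as HN0.
  assert (HN : 2 <= INR n) by (apply (le_INR 2) in Hn; simpl in Hn; lra).
  pose proof (shift1 _ _ _ H0) as H1. pose proof (shift1 _ _ _ H1) as H2.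
  pose proof (shift1 _ _ _ H2) as H3.
  destruct (two_shift_vals n (c 1%nat) (c 2%nat)) as [F1 [S1 [F2 S2]]].
  set (g1 := Cminus (Cmult (base n) (RtoC 0)) (IZR (c 1%nat), 0)) in *.
  set (g2 := Cminus (Cmult (base n) g1) (IZR (c 2%nat), 0)) in *.
  simpl in H2. fold g1 in H2. fold g2 in H2.
  assert (Hbd2 := DD_bound n D _ HD (DD_shift D _ (DD_shift D _ Hc))).
  assert (Hbd3 := DD_bound n D _ HD (DD_shift D _ (DD_shift D _ (DD_shift D _ Hc)))).
  assert (HE2 := DD_bound n D _ HD Hc 1%nat).
  assert (Hsmall : (Z.abs (c 1%nat) <= if (5 <=? n)%nat then 2 else 3)%Z).
  { destruct (Nat.leb_spec 5 n) as [H5|H5].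
    - assert (HN5 : 5 <= INR n) by (apply (le_INR 5) in H5; simpl in H5; lra).
      assert (Hq : 0 <= (INR n - 5) * (INR n - 5)) by nra.
      assert (C1 : 299/100 + INR n * (2 * (INR n * INR n) + (2 * INR n + 5/2)) <= (2 * INR n + 5/2) * (INR n * INR n + 1)) by nra.
      assert (C2 : 2 * (INR n * INR n) + (2 * INR n + 5/2) + INR n * (299/100) <= 299/100 * (INR n * INR n + 1)) by nra.
      assert (HR := rect_bound n (299/100) (2 * INR n + 5/2) (2 * (INR n * INR n))
                     ltac:(lra) ltac:(lra) C1 C2 _ _ Hbd2 H2).
      destruct HR as [_ HR]. rewrite S2, Rabs_Ropp in HR.
      rewrite <- abs_IZR in HR. assert (IZR (Z.abs (c 1%nat)) < IZR 3) by lra.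
      apply lt_IZR in H. lia.
    - destruct (Nat.eq_dec n 2) as [E2|E2].
      + subst n. assert (I2 : INR 2 = 2) by (simpl; lra). rewrite I2 in *.
        assert (Hb3 : forall j, Rabs (IZR (c (S (S (S (S j)))))) <= 8) by (intro j; specialize (Hbd3 j); lra).
        assert (C1 : 5 + 2 * (8 + 7) <= 7 * (2 * 2 + 1)) by lra.
        assert (C2 : 8 + 7 + 2 * 5 <= 5 * (2 * 2 + 1)) by lra.
        assert (HR := rect_bound 2 5 7 8 ltac:(lra) ltac:(lra) ltac:(rewrite I2; lra) ltac:(rewrite I2; lra) _ _ Hb3 H3).
        destruct HR as [_ HR]. rewrite third_val, F2, S2, I2 in HR.
        rewrite <- abs_IZR in HE2. apply Rabs_le_between in HR.
        assert (Hz : (Z.abs (c 2%nat) <= 8)%Z).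
        { apply le_IZR. lra. }
        assert (Hz2 : (-5 <= 4 * c 1%nat - c 2%nat <= 5)%Z).
        { split; apply le_IZR; rewrite minus_IZR, mult_IZR; lra. }
        simpl. lia.
      + assert (HN3 : 3 <= INR n) by (replace 3 with (INR 3) by (simpl; lra); apply le_INR; lia).
        assert (HN4 : INR n <= 4) by (replace 4 with (INR 4) by (simpl; lra); apply le_INR; lia).
        assert (Hq : 0 <= (INR n - 3) * (INR n - 3)) by nra.
        assert (Hq2 : 0 <= (INR n - 3) * INR n) by nra.
        assert (C1 : 39/10 + INR n * (2 * (INR n * INR n) + (2 * INR n + 5/2)) <= (2 * INR n + 5/2) * (INR n * INR n + 1)) by nra.
        assert (C2 : 2 * (INR n * INR n) + (2 * INR n + 5/2) + INR n * (39/10) <= 39/10 * (INR n * INR n + 1)) by nra.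
        assert (HR := rect_bound n (39/10) (2 * INR n + 5/2) (2 * (INR n * INR n))
                     ltac:(lra) ltac:(lra) C1 C2 _ _ Hbd2 H2).
        destruct HR as [_ HR]. rewrite S2, Rabs_Ropp in HR.
        rewrite <- abs_IZR in HR. assert (IZR (Z.abs (c 1%nat)) < IZR 4) by lra.
        apply lt_IZR in H. lia. }
  assert (Hc1 : c 1%nat = 0%Z).
  { destruct (Hc 0%nat) as [x [y [Hx [Hy Exy]]]].
    destruct (Z.eq_dec x y) as [->|Hne]; [lia|].
    specialize (Hsp x y Hx Hy Hne). rewrite <- Exy in Hsp.
    destruct (5 <=? n)%nat; lia. }
  split; auto.
  eapply expansion_eqz; [|exact H1].
  unfold g1. rewrite Hc1. unfold base, Cmult, Cminus, Cplus, Copp, RtoC. simpl.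
  apply injective_projections; simpl; ring.
Qed.

Lemma KL n D e : (2 <= n)%nat -> (forall d, D d = true -> (d <= n * n)%nat) -> sparse n D ->
  DD D e -> expansion n e (RtoC 0) -> forall j, e (S j) = 0%Z.
Proof.
  intros Hn HD Hsp He H0.
  assert (Cl : forall k, DD D (fun j => e (j + k)%nat) /\ expansion n (fun j => e (j + k)%nat) (RtoC 0)).
  { induction k as [|k [IH1 IH2]].
    - split.
      + intro j. destruct (He j) as [x [y [? [? E]]]]. exists x, y. rewrite Nat.add_0_r. auto.
      + eapply expansion_ext; [|exact H0]. intro j. now rewrite Nat.add_0_r.
    - destruct (KL_step n D _ Hn HD Hsp IH1 IH2) as [_ H2]. split.
      + intro j. destruct (IH1 (S j)) as [x [y [? [? E]]]]. exists x, y.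
        replace (S j + S k)%nat with (S (S j) + k)%nat by lia. auto.
      + eapply expansion_ext; [|exact H2]. intro j. simpl. f_equal. lia. }
  intro j. destruct (Cl j) as [H1 H2].
  destruct (KL_step n D _ Hn HD Hsp H1 H2) as [H3 _]. exact H3.
Qed.

Lemma pair_minus (x y : R) : (x - y, 0) = Cminus (RtoC x) (RtoC y).
Proof. unfold RtoC, Cminus, Cplus, Copp. apply injective_projections; simpl; ring. Qed.

Lemma expansion_minus n c1 c2 z1 z2 : expansion n c1 z1 -> expansion n c2 z2 ->
  expansion n (fun j => (c1 j - c2 j)%Z) (Cminus z1 z2).
Proof.
  intros H1 H2. pose proof (is_series_minus _ _ _ _ H1 H2) as H.
  eapply is_series_ext; [|exact H]. intro j.
  change (Cplus (digit_term n c1 j) (Copp (digit_term n c2 j)) = digit_term n (fun j => (c1 j - c2 j)%Z) j).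
  unfold digit_term. rewrite minus_IZR, pair_minus.
  change (IZR (c1 (S j)), 0) with (RtoC (IZR (c1 (S j)))).
  change (IZR (c2 (S j)), 0) with (RtoC (IZR (c2 (S j)))). ring.
Qed.

Definition El n D (a : nat -> Z) j : list nat :=
  filter (fun d => D d && inDz D (Z.of_nat d - a j)) (seq 0 (n * n + 1)).

Lemma El_card n D a j : card_shift n D (a j) = length (El n D a j).
Proof. reflexivity. Qed.

Lemma In_El n D a j d : (forall d, D d = true -> (d <= n * n)%nat) ->
  In d (El n D a j) <-> (D d = true /\ inDz D (Z.of_nat d - a j) = true).
Proof.
  intros HD. unfold El. rewrite filter_In, in_seq, andb_true_iff. split.
  - tauto.
  - intros [H1 H2]. split; auto. apply HD in H1. lia.
Qed.

Lemma inDz_nat D (m : nat) : inDz D (Z.of_nat m) = D m.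
Proof. unfold inDz. rewrite Nat2Z.id. destruct (Z.leb_spec 0 (Z.of_nat m)); [reflexivity|lia]. Qed.

Lemma inDz_spec D x : inDz D x = true -> (0 <= x)%Z /\ D (Z.to_nat x) = true.
Proof. unfold inDz. rewrite andb_true_iff, Z.leb_le. auto. Qed.

Lemma F_digits n D a alpha z : (2 <= n)%nat -> (forall d, D d = true -> (d <= n * n)%nat) -> sparse n D ->
  (forall j, (1 <= j)%nat -> in_Delta D (a j)) -> expansion n a alpha ->
  CnD n D z -> CnD n D (Cminus z alpha) ->
  exists d : nat -> nat, (forall j, (1 <= j)%nat -> In (d j) (El n D a j)) /\
     expansion n (fun j => Z.of_nat (d j)) z.
Proof.
  intros Hn HD Hsp Ha Halpha [d [Hd1 Hd2]] [d' [Hd'1 Hd'2]].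
  exists d. split; auto.
  set (e := fun j => (Z.of_nat (d j) - Z.of_nat (d' j) - a j)%Z).
  assert (He : expansion n e (RtoC 0)).
  { pose proof (expansion_minus _ _ _ _ _ (expansion_minus _ _ _ _ _ Hd2 Hd'2) Halpha) as H.
    eapply expansion_eqz; [|exact H].
    change (Cminus (Cminus z (Cminus z alpha)) alpha = RtoC 0). ring. }
  assert (HDD : DD D e).
  { intro j. exists (Z.of_nat (d (S j)) - Z.of_nat (d' (S j)))%Z, (a (S j)). repeat split.
    - exists (d (S j)), (d' (S j)). repeat split; auto; apply Hd1 || apply Hd'1; lia.
    - apply Ha. lia. }
  pose proof (KL n D e Hn HD Hsp HDD He) as HK.
  intros j Hj. destruct j as [|j]; [lia|].
  apply In_El; auto. split. apply Hd1; lia.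
  specialize (HK j). unfold e in HK.
  replace (Z.of_nat (d (S j)) - a (S j))%Z with (Z.of_nat (d' (S j))) by lia.
  rewrite inDz_nat. apply Hd'1. lia.
Qed.

Lemma G_in_F n D a alpha (d : nat -> nat) z : (forall d, D d = true -> (d <= n * n)%nat) ->
  (forall j, (1 <= j)%nat -> In (d j) (El n D a j)) -> expansion n (fun j => Z.of_nat (d j)) z ->
  expansion n a alpha -> CnD n D z /\ CnD n D (Cminus z alpha).
Proof.
  intros HD Hd Hz Ha. split.
  - exists d. split; auto. intros j Hj. apply (proj1 (In_El n D a j (d j) HD) (Hd j Hj)).
  - exists (fun j => Z.to_nat (Z.of_nat (d j) - a j)). split.
    + intros j Hj. pose proof (proj1 (In_El n D a j (d j) HD) (Hd j Hj)) as H.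
      apply (inDz_spec _ _ (proj2 H)).
    + pose proof (expansion_minus _ _ _ _ _ Hz Ha) as H.
      eapply expansion_ext; [|exact H]. intro j. simpl.
      assert (Hj : (1 <= S j)%nat) by lia. apply Hd in Hj. apply (In_El n D a _ _ HD) in Hj.
      destruct Hj as [_ Hj]. apply inDz_spec in Hj. lia.
Qed.

Fixpoint prefs n D a (k : nat) : list (list nat) :=
  match k with
  | O => [nil]
  | S k' => flat_map (fun p => map (fun d => p ++ [d]) (El n D a (S k'))) (prefs n D a k')
  end.

Lemma prefs_len n D a k : length (prefs n D a k) = Mk n D a k.
Proof.
  induction k as [|k IH]; simpl; auto.
  rewrite (flat_map_constant_length (c := length (El n D a (S k)))).
  - rewrite IH. reflexivity.
  - intros x _. apply length_map.
Qed.

Lemma prefs_in n D a k p : In p (prefs n D a k) ->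
  length p = k /\ forall i, (i < k)%nat -> In (nth i p 0%nat) (El n D a (S i)).
Proof.
  revert p. induction k as [|k IH]; intros p Hp.
  - simpl in Hp. destruct Hp as [<-|[]]. split; auto. intros; lia.
  - simpl in Hp. apply in_flat_map in Hp. destruct Hp as [q [Hq Hp]].
    apply in_map_iff in Hp. destruct Hp as [d [<- Hd]].
    destruct (IH q Hq) as [Hl Hi]. split.
    + rewrite length_app. simpl. lia.
    + intros i Hik. destruct (Nat.lt_ge_cases i k) as [Hlt|Hge].
      * rewrite app_nth1 by lia. auto.
      * assert (i = k) by lia. subst i. rewrite app_nth2 by lia.
        rewrite Hl, Nat.sub_diag. simpl. auto.
Qed.

Definition pl (d : nat -> nat) k : list nat := map (fun i => d (S i)) (seq 0 k).

Lemma pl_len d k : length (pl d k) = k.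
Proof. unfold pl. rewrite length_map, length_seq. auto. Qed.

Lemma pl_nth d k i : (i < k)%nat -> nth i (pl d k) 0%nat = d (S i).
Proof.
  intro Hi. unfold pl. rewrite (nth_indep (map (fun i => d (S i)) (seq 0 k)) 0%nat (d (S 0%nat)))
    by (rewrite length_map, length_seq; lia).
  rewrite (map_nth (fun i => d (S i))). rewrite seq_nth by lia. reflexivity.
Qed.

Lemma pl_in n D a d k : (forall j, (1 <= j <= k)%nat -> In (d j) (El n D a j)) ->
  In (pl d k) (prefs n D a k).
Proof.
  induction k as [|k IH]; intros Hd.
  - simpl. auto.
  - simpl. apply in_flat_map. exists (pl d k). split.
    + apply IH. intros j Hj. apply Hd. lia.
    + unfold pl. rewrite seq_S, map_app. simpl. apply in_map_iff. exists (d (S k)).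
      split; [reflexivity|apply Hd; lia].
Qed.

Lemma NoDup_flat_map' {A B : Type} (f : A -> list B) (l : list A) :
  NoDup l -> (forall x, In x l -> NoDup (f x)) ->
  (forall x y z, In x l -> In y l -> In z (f x) -> In z (f y) -> x = y) ->
  NoDup (flat_map f l).
Proof.
  induction l as [|x l IH]; intros Hl Hf Hd; simpl.
  - constructor.
  - inversion Hl; subst. apply NoDup_app.
    + apply Hf. left; auto.
    + apply IH; auto. intros x' Hx'. apply Hf. right; auto.
      intros x1 y1 z Hx1 Hy1 Hz1 Hz2. apply (Hd x1 y1 z); auto; right; auto.
    + intros z Hz Hz'. apply in_flat_map in Hz'. destruct Hz' as [y [Hy Hzy]].
      assert (x = y) by (apply (Hd x y z); auto; [left|right]; auto). subst. contradiction.
Qed.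

Lemma prefs_nodup n D a k : NoDup (prefs n D a k).
Proof.
  induction k as [|k IH]; simpl.
  - constructor. simpl; tauto. constructor.
  - apply NoDup_flat_map'; auto.
    + intros x _. apply NoDup_map_NoDup_ForallPairs.
      * intros d1 d2 _ _ E. apply app_inj_tail in E. tauto.
      * apply NoDup_filter, seq_NoDup.
    + intros x y z _ _ Hx Hy. apply in_map_iff in Hx, Hy.
      destruct Hx as [d1 [<- _]]. destruct Hy as [d2 [E _]].
      apply app_inj_tail in E. destruct E; auto.
Qed.

Definition ext (estar : nat -> nat) (p : list nat) (j : nat) : nat :=
  if (j <=? length p)%nat then nth (j - 1) p 0%nat else estar j.

Lemma ext_in n D a k estar p : (forall j, (1 <= j)%nat -> In (estar j) (El n D a j)) ->
  In p (prefs n D a k) -> forall j, (1 <= j)%nat -> In (ext estar p j) (El n D a j).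
Proof.
  intros Hs Hp j Hj. destruct (prefs_in _ _ _ _ _ Hp) as [Hl Hi]. unfold ext.
  destruct (Nat.leb_spec j (length p)).
  - replace j with (S (j - 1)) at 2 by lia. apply Hi. lia.
  - auto.
Qed.

Lemma ext_pl estar d k j : (1 <= j <= k)%nat -> ext estar (pl d k) j = d j.
Proof.
  intro Hj. unfold ext. rewrite pl_len. destruct (Nat.leb_spec j k); [|lia].
  rewrite pl_nth by lia. f_equal. lia.
Qed.

Lemma Cmod_cpow x k : Cmod (cpow x k) = Cmod x ^ k.
Proof.
  induction k as [|k IH].
  - unfold cpow. simpl. apply Cmod_1.
  - rewrite pow_n_C_S, Cmod_mult, IH. reflexivity.
Qed.

Lemma r_ge2 n : (2 <= n)%nat -> 2 <= Cmod (base n).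
Proof.
  intro Hn. assert (HN : 2 <= INR n) by (apply (le_INR 2) in Hn; simpl in Hn; lra).
  unfold Cmod, base. simpl. rewrite <- (sqrt_square 2) by lra. apply sqrt_le_1_alt. nra.
Qed.

Lemma Cmod_bq n : Cmod (bq n) = / Cmod (base n).
Proof. unfold bq. apply Cmod_inv, base_neq0. Qed.

Lemma series_exists n (d : nat -> nat) : (2 <= n)%nat -> (forall j, (d j <= n * n)%nat) ->
  exists z, expansion n (fun j => Z.of_nat (d j)) z.
Proof.
  intros Hn Hd. pose proof (r_ge2 n Hn) as Hr.
  set (q := / Cmod (base n)).
  assert (Hq : 0 < q < 1) by (unfold q; split; [apply Rinv_0_lt_compat; lra|
     apply (Rmult_lt_reg_r (Cmod (base n))); [lra|]; rewrite Rinv_l by lra; lra]).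
  assert (Hex : ex_series (fun j => INR (n * n) * q * q ^ j)).
  { apply (ex_series_scal (V := R_NormedModule) (INR (n * n) * q)). apply ex_series_geom.
    rewrite Rabs_pos_eq; lra. }
  assert (H : ex_series (K:=C_AbsRing) (V:=C_CompleteNormedModule) (digit_term n (fun j => Z.of_nat (d j)))).
  2:{ destruct H as [z Hz]. exists z. exact Hz. }
  apply ex_series_le with (b := fun j => INR (n * n) * q * q ^ j); [|exact Hex].
  intro j. change (Cmod (digit_term n (fun j0 => Z.of_nat (d j0)) j) <= INR (n * n) * q * q ^ j). unfold digit_term. rewrite Cmod_mult, Cmod_inv by apply pow_n_neq0.
    change (pow_n (K:=C_Ring) (base n) (S j)) with (cpow (base n) (S j)).
    rewrite Cmod_cpow. change (IZR (Z.of_nat (d (S j))), 0) with (RtoC (IZR (Z.of_nat (d (S j))))).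
    rewrite Cmod_R, <- INR_IZR_INZ, Rabs_pos_eq by apply pos_INR.
    rewrite <- pow_inv. fold q. simpl.
    assert (0 <= q ^ j) by (apply pow_le; lra).
    assert (INR (d (S j)) <= INR (n*n)) by (apply le_INR, Hd). rewrite Rmult_assoc. apply Rmult_le_compat_r; [apply Rmult_le_pos; lra|auto].
Qed.

Lemma series_exists' n (d : nat -> nat) : (2 <= n)%nat -> (forall j, (d (S j) <= n * n)%nat) ->
  exists z, expansion n (fun j => Z.of_nat (d j)) z.
Proof.
  intros Hn Hd.
  destruct (series_exists n (fun j => match j with O => O | S _ => d j end) Hn) as [z Hz].
  - intros [|j]; [lia|apply Hd].
  - exists z. eapply expansion_ext; [|exact Hz]. reflexivity.
Qed.

Lemma tail_bound n : (2 <= n)%nat -> forall k c w, expansion n c w ->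
  (forall j, (1 <= j <= k)%nat -> c j = 0%Z) ->
  (forall j, Rabs (IZR (c (S j))) <= INR n * INR n) ->
  Cmod w <= INR n * INR n * (/ Cmod (base n)) ^ k.
Proof.
  intros Hn. pose proof (r_ge2 n Hn) as Hr.
  induction k as [|k IH]; intros c w Hw H0 Hb.
  - simpl. rewrite Rmult_1_r. eapply disc_bound; eauto.
  - pose proof (shift1 _ _ _ Hw) as H1.
    rewrite (H0 1%nat) in H1 by lia.
    specialize (IH _ _ H1 ltac:(intros j Hj; apply H0; lia) ltac:(intro j; apply Hb)).
    assert (E : Cminus (Cmult (base n) w) (IZR 0, 0) = Cmult (base n) w).
    { unfold Cminus, Cplus, Copp, Cmult. simpl. apply injective_projections; simpl; ring. }
    rewrite E, Cmod_mult in IH. simpl.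
    apply (Rmult_le_reg_l (Cmod (base n))). lra.
    replace (Cmod (base n) * (INR n * INR n * (/ Cmod (base n) * (/ Cmod (base n)) ^ k)))
      with (INR n * INR n * (/ Cmod (base n)) ^ k) by (field; lra). exact IH.
Qed.

Definition isG (z : C) : Prop := exists x y : Z, z = (IZR x, IZR y).

Lemma isG_mult z w : isG z -> isG w -> isG (Cmult z w).
Proof.
  intros [x [y ->]] [u [v ->]]. exists (x * u - y * v)%Z, (x * v + y * u)%Z.
  unfold Cmult. simpl. rewrite minus_IZR, plus_IZR, !mult_IZR. reflexivity.
Qed.

Lemma isG_plus z w : isG z -> isG w -> isG (Cplus z w).
Proof.
  intros [x [y ->]] [u [v ->]]. exists (x + u)%Z, (y + v)%Z.
  unfold Cplus. simpl. rewrite !plus_IZR. reflexivity.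
Qed.

Lemma isG_cpow n k : isG (cpow (base n) k).
Proof.
  induction k as [|k IH].
  - exists 1%Z, 0%Z. reflexivity.
  - rewrite pow_n_C_S. apply isG_mult; auto. exists (- Z.of_nat n)%Z, 1%Z.
    unfold base. rewrite opp_IZR, <- INR_IZR_INZ. reflexivity.
Qed.

Lemma GI n : forall k c w, expansion n c w -> (forall j, (k <= j)%nat -> c (S j) = 0%Z) ->
  isG (Cmult (cpow (base n) k) w).
Proof.
  induction k as [|k IH]; intros c w Hw H0.
  - rewrite (zero_series n c w) by (auto with arith).
    exists 0%Z, 0%Z. unfold cpow. simpl. unfold Cmult. simpl.
    apply injective_projections; simpl; ring.
  - pose proof (shift1 _ _ _ Hw) as H1.
    specialize (IH _ _ H1 ltac:(intros j Hj; apply H0; lia)).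
    assert (E : Cmult (cpow (base n) (S k)) w =
      Cplus (Cmult (cpow (base n) k) (Cminus (Cmult (base n) w) (IZR (c 1%nat), 0)))
            (Cmult (cpow (base n) k) (IZR (c 1%nat), 0))).
    { rewrite pow_n_C_S. ring. }
    rewrite E. apply isG_plus; auto. apply isG_mult. apply isG_cpow.
    exists (c 1%nat), 0%Z. reflexivity.
Qed.

Lemma isG_small z : isG z -> Cmod z < 1 -> z = RtoC 0.
Proof.
  intros [x [y ->]] H.
  pose proof (fst_le_Cmod (IZR x, IZR y)) as H1. pose proof (snd_le_Cmod (IZR x, IZR y)) as H2.
  simpl in H1, H2. rewrite <- abs_IZR in H1, H2.
  assert (Hx : (Z.abs x < 1)%Z) by (apply lt_IZR; lra).
  assert (Hy : (Z.abs y < 1)%Z) by (apply lt_IZR; lra).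
  assert (x = 0%Z) by lia. assert (y = 0%Z) by lia. subst. reflexivity.
Qed.

Lemma len_le1 {A} (l : list A) : NoDup l -> (forall x y, In x l -> In y l -> x = y) -> (length l <= 1)%nat.
Proof.
  destruct l as [|x [|y l]]; simpl; auto. intros Hn H.
  inversion Hn; subst. exfalso. apply H2. left. apply H; simpl; auto.
Qed.

Lemma counting (m : nat) (U : nat -> C -> Prop) (delta : R) (f : list nat -> C) :
  (forall i, (i < m)%nat -> forall x y, U i x -> U i y -> Cmod (Cminus x y) <= delta) ->
  forall L : list (list nat), NoDup L -> (forall p, In p L -> exists i, (i < m)%nat /\ U i (f p)) ->
  (forall p q, In p L -> In q L -> Cmod (Cminus (f p) (f q)) <= delta -> p = q) ->
  (length L <= m)%nat.
Proof.
  induction m as [|m IH]; intros HU L HL Hc Hs.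
  - destruct L as [|p L]; simpl; auto. destruct (Hc p (or_introl eq_refl)) as [i [Hi _]]. lia.
  - set (g := fun p => if excluded_middle_informative (U m (f p)) then true else false).
    rewrite <- (filter_length g L).
    assert (H1 : (length (filter g L) <= 1)%nat).
    { apply len_le1. apply NoDup_filter; auto.
      intros x y Hx Hy. apply filter_In in Hx, Hy. destruct Hx as [Hx Gx]. destruct Hy as [Hy Gy].
      unfold g in Gx, Gy. destruct (excluded_middle_informative (U m (f x))) as [Ux|]; [|discriminate].
      destruct (excluded_middle_informative (U m (f y))) as [Uy|]; [|discriminate].
      apply Hs; auto. apply (HU m); auto. }
    assert (H2 : (length (filter (fun x => negb (g x)) L) <= m)%nat).
    { apply IH.
      - intros i Hi. apply HU. lia.
      - apply NoDup_filter; auto.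
      - intros p Hp. apply filter_In in Hp. destruct Hp as [Hp Gp].
        destruct (Hc p Hp) as [i [Hi Ui]]. exists i. split; auto.
        destruct (Nat.eq_dec i m) as [->|Hne]; [|lia].
        unfold g in Gp. destruct (excluded_middle_informative (U m (f p))); [discriminate|contradiction].
      - intros p q Hp Hq. apply filter_In in Hp, Hq. apply Hs; tauto. }
    lia.
Qed.

Definition estar n D a j : nat := hd 0%nat (El n D a j).

Lemma El_le n D a j d : (forall d, D d = true -> (d <= n * n)%nat) -> In d (El n D a j) -> (d <= n * n)%nat.
Proof. intros HD H. apply (In_El n D a j d HD) in H. apply HD. tauto. Qed.

Lemma El_D n D a j d : (forall d, D d = true -> (d <= n * n)%nat) -> In d (El n D a j) -> D d = true.
Proof. intros HD H. apply (In_El n D a j d HD) in H. tauto. Qed.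

Lemma estar_in n D a : (forall d, D d = true -> (d <= n * n)%nat) ->
  (forall j, (1 <= j)%nat -> in_Delta D (a j)) -> forall j, (1 <= j)%nat -> In (estar n D a j) (El n D a j).
Proof.
  intros HD Ha j Hj. destruct (Ha j Hj) as [d [d' [H1 [H2 E]]]].
  assert (Hin : In d (El n D a j)).
  { apply In_El; auto. split; auto. rewrite E.
    replace (Z.of_nat d - (Z.of_nat d - Z.of_nat d'))%Z with (Z.of_nat d') by lia.
    rewrite inDz_nat. auto. }
  unfold estar. destruct (El n D a j) as [|h t]; simpl; [destruct Hin|auto].
Qed.

Definition cond n D a (p : list nat) : Prop :=
  forall j, (1 <= j)%nat -> In (ext (estar n D a) p j) (El n D a j).

Lemma zp_exists n D a : (2 <= n)%nat -> (forall d, D d = true -> (d <= n * n)%nat) ->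
  exists zp : list nat -> C, forall p, cond n D a p ->
    expansion n (fun j => Z.of_nat (ext (estar n D a) p j)) (zp p).
Proof.
  intros Hn HD.
  apply (choice (fun p z => cond n D a p -> expansion n (fun j => Z.of_nat (ext (estar n D a) p j)) z)).
  intro p. destruct (classic (cond n D a p)) as [Hc|Hc].
  - destruct (series_exists' n (ext (estar n D a) p) Hn) as [z Hz].
    + intro j. apply (El_le n D a (S j)); auto. apply Hc. lia.
    + exists z. auto.
  - exists (RtoC 0). intro; contradiction.
Qed.

Definition Fset n D alpha : C -> Prop := fun z => CnD n D z /\ CnD n D (Cminus z alpha).

Lemma absdiff_bound n (x y : nat) : (x <= n * n)%nat -> (y <= n * n)%nat ->
  Rabs (IZR (Z.of_nat x - Z.of_nat y)) <= INR n * INR n.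
Proof.
  intros Hx Hy. rewrite <- abs_IZR, <- INR_sq, INR_IZR_INZ. apply IZR_le. lia.
Qed.

Lemma upper_cover n D a alpha : (2 <= n)%nat -> (forall d, D d = true -> (d <= n * n)%nat) ->
  sparse n D -> (forall j, (1 <= j)%nat -> in_Delta D (a j)) -> expansion n a alpha ->
  forall k, covers_with (Mk n D a k) (2 * (INR n * INR n * (/ Cmod (base n)) ^ k)) (Fset n D alpha).
Proof.
  intros Hn HD Hsp Ha Halpha k.
  destruct (zp_exists n D a Hn HD) as [zp Hzp].
  exists (fun i w => Cmod (Cminus w (zp (nth i (prefs n D a k) nil))) <= INR n * INR n * (/ Cmod (base n)) ^ k).
  split.
  - intros i _ x y Hx Hy.
    set (z0 := zp (nth i (prefs n D a k) nil)) in *.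
    assert (E : Cminus x y = Cplus (Cminus x z0) (Copp (Cminus y z0))) by ring.
    rewrite E. eapply Rle_trans; [apply Cmod_triangle|]. rewrite Cmod_opp. lra.
  - intros z [Hz1 Hz2].
    destruct (F_digits n D a alpha z Hn HD Hsp Ha Halpha Hz1 Hz2) as [d [Hd Hdz]].
    assert (Hp : In (pl d k) (prefs n D a k)) by (apply pl_in; intros j Hj; apply Hd; lia).
    destruct (In_nth _ _ nil Hp) as [i [Hi Ei]]. rewrite prefs_len in Hi.
    exists i. split; auto. rewrite Ei.
    assert (Hc : cond n D a (pl d k)).
    { intros j Hj. apply (ext_in n D a k); auto. apply estar_in; auto. }
    pose proof (expansion_minus _ _ _ _ _ Hdz (Hzp _ Hc)) as Hm.
    eapply tail_bound; [exact Hn|exact Hm| |].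
    + intros j Hj. simpl. rewrite ext_pl by lia. lia.
    + intro j. apply absdiff_bound.
      * apply (El_le n D a (S j)); auto. apply Hd. lia.
      * apply (El_le n D a (S j)); auto. apply Hc. lia.
Qed.

Lemma lower_count n D a alpha : (2 <= n)%nat -> (forall d, D d = true -> (d <= n * n)%nat) ->
  sparse n D -> (forall j, (1 <= j)%nat -> in_Delta D (a j)) -> expansion n a alpha ->
  forall k m delta, delta < (/ Cmod (base n)) ^ k -> covers_with m delta (Fset n D alpha) ->
  (Mk n D a k <= m)%nat.
Proof.
  intros Hn HD Hsp Ha Halpha k m delta Hdel [U [HU Hcov]].
  pose proof (r_ge2 n Hn) as Hr.
  destruct (zp_exists n D a Hn HD) as [zp Hzp].
  assert (Hcond : forall p, In p (prefs n D a k) -> cond n D a p).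
  { intros p Hp j Hj. apply (ext_in n D a k); auto. apply estar_in; auto. }
  rewrite <- prefs_len.
  apply (counting m U delta zp HU).
  - apply prefs_nodup.
  - intros p Hp. apply Hcov. apply (G_in_F n D a alpha (ext (estar n D a) p)); auto.
    apply Hcond; auto.
  - intros p q Hp Hq Hpq.
    pose proof (expansion_minus _ _ _ _ _ (Hzp p (Hcond p Hp)) (Hzp q (Hcond q Hq))) as Hm.
    set (w := Cminus (zp p) (zp q)) in *.
    destruct (prefs_in _ _ _ _ _ Hp) as [Lp Ip]. destruct (prefs_in _ _ _ _ _ Hq) as [Lq Iq].
    assert (Hz : forall j, (k <= j)%nat ->
      (Z.of_nat (ext (estar n D a) p (S j)) - Z.of_nat (ext (estar n D a) q (S j)))%Z = 0%Z).
    { intros j Hj. unfold ext. rewrite Lp, Lq. destruct (Nat.leb_spec (S j) k); [lia|]. lia. }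
    pose proof (GI n k _ _ Hm Hz) as HG.
    assert (Hw0 : w = RtoC 0).
    { assert (Hk : Cmult (cpow (base n) k) w = RtoC 0).
      { apply isG_small; auto. rewrite Cmod_mult, Cmod_cpow.
        assert (0 < Cmod (base n) ^ k) by (apply pow_lt; lra).
        assert (E1 : Cmod (base n) ^ k * (/ Cmod (base n)) ^ k = 1)
          by (rewrite <- Rpow_mult_distr, Rinv_r by lra; apply pow1).
        rewrite <- E1. apply Rmult_lt_compat_l; lra. }
      apply (f_equal Cmod) in Hk. rewrite Cmod_mult, Cmod_0, Cmod_cpow in Hk.
      apply Rmult_integral in Hk. destruct Hk as [Hk|Hk].
      - exfalso. assert (0 < Cmod (base n) ^ k) by (apply pow_lt; lra). lra.
      - apply Cmod_eq_0; auto. }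
    rewrite Hw0 in Hm.
    assert (HDD : DD D (fun j => (Z.of_nat (ext (estar n D a) p j) - Z.of_nat (ext (estar n D a) q j))%Z)).
    { intro j. set (x := ext (estar n D a) p (S j)). set (y := ext (estar n D a) q (S j)).
      assert (Dx : D x = true) by (apply (El_D n D a (S j)); auto; apply Hcond; auto; lia).
      assert (Dy : D y = true) by (apply (El_D n D a (S j)); auto; apply Hcond; auto; lia).
      exists (Z.of_nat x - Z.of_nat y)%Z, 0%Z. repeat split.
      - exists x, y. auto.
      - exists x, x. repeat split; auto. lia.
      - lia. }
    pose proof (KL n D _ Hn HD Hsp HDD Hm) as HK.
    apply nth_ext with (d := 0%nat) (d' := 0%nat). lia.
    intros i Hi. specialize (HK i). 
    assert (Ep : ext (estar n D a) p (S i) = nth i p 0%nat).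
    { unfold ext. destruct (Nat.leb_spec (S i) (length p)); [|lia]. f_equal. lia. }
    assert (Eq : ext (estar n D a) q (S i) = nth i q 0%nat).
    { unfold ext. destruct (Nat.leb_spec (S i) (length q)); [|lia]. f_equal. lia. }
    lia.
Qed.

Lemma exists_nat_gt x : exists N : nat, x < INR N.
Proof.
  destruct (archimed x) as [H1 _].
  destruct (Z_le_gt_dec 0 (up x)) as [H|H].
  - exists (Z.to_nat (up x)). rewrite INR_IZR_INZ, Z2Nat.id by lia. lra.
  - exists 0%nat. simpl. apply Z.gt_lt in H. apply IZR_lt in H. lra.
Qed.

Lemma ln_le' x y : 0 < x -> x <= y -> ln x <= ln y.
Proof. intros Hx [H|H]. left. apply ln_increasing; auto. subst; lra. Qed.

Lemma ln_le_inv x y : 0 < x -> 0 < y -> ln x <= ln y -> x <= y.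
Proof. intros Hx Hy H. destruct (Rle_lt_dec x y); auto. apply ln_increasing in r; auto. lra. Qed.

Lemma covers_mono m d d' F : d <= d' -> covers_with m d F -> covers_with m d' F.
Proof.
  intros Hd [U [H1 H2]]. exists U. split; auto. intros i Hi x y Hx Hy.
  specialize (H1 i Hi x y Hx Hy). lra.
Qed.


Lemma ln_invpow r k : 1 < r -> ln ((/ r) ^ k) = - (INR k * ln r).
Proof.
  intro Hr. rewrite ln_pow by (apply Rinv_0_lt_compat; lra). rewrite ln_Rinv by lra. ring.
Qed.

Lemma CN (F : C -> Prop) (r K1 : R) (M : nat -> nat) :
  1 < r -> 1 <= K1 ->
  (forall k, covers_with (M k) (K1 * (/ r) ^ k) F) ->
  (forall k m delta, delta < (/ r) ^ k -> covers_with m delta F -> (M k <= m)%nat) ->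
  forall delta, 0 < delta < 1 ->
  exists N : R, cover_number F delta = Finite N /\
    (forall k, delta < (/ r) ^ k -> INR (M k) <= N) /\
    (forall m, covers_with m delta F -> N <= INR m).
Proof.
  intros Hr HK Hup Hlow delta Hd.
  assert (Hlam : 0 < ln r) by (rewrite <- ln_1; apply ln_increasing; lra).
  destruct (exists_nat_gt ((ln K1 - ln delta) / ln r)) as [k0 Hk0].
  assert (Hc0 : covers_with (M k0) delta F).
  { apply covers_mono with (K1 * (/ r) ^ k0); auto.
    apply ln_le_inv. apply Rmult_lt_0_compat; [lra|apply pow_lt, Rinv_0_lt_compat; lra]. lra.
    rewrite ln_mult, ln_invpow by (try apply pow_lt, Rinv_0_lt_compat; lra).
    apply (Rmult_lt_compat_r (ln r)) in Hk0; auto.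
    unfold Rdiv in Hk0. rewrite Rmult_assoc, Rinv_l in Hk0 by lra. lra. }
  unfold cover_number, Rbar_glb. destruct (Rbar_ex_glb _) as [g [Hlb Hglb]]. simpl.
  assert (Hlow' : forall k, delta < (/ r) ^ k -> Rbar_le (Finite (INR (M k))) g).
  { intros k Hk. apply Hglb. intros x [m [-> Hm]]. simpl. apply le_INR. eapply Hlow; eauto. }
  assert (Hg1 : Rbar_le (Finite (INR (M 0%nat))) g) by (apply Hlow'; simpl; lra).
  assert (Hg2 : Rbar_le g (Finite (INR (M k0)))) by (apply Hlb; exists (M k0); auto).
  destruct g as [N| |]; simpl in Hg1, Hg2; try contradiction.
  exists N. split; auto. split.
  - intros k Hk. exact (Hlow' k Hk).
  - intros m Hm. apply (Hlb (Finite (INR m))). exists m; auto.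
Qed.

Lemma div_ge C A B : 0 < B -> C * B <= A -> C <= A / B.
Proof.
  intros HB H. apply (Rmult_le_reg_r B); auto. unfold Rdiv. rewrite Rmult_assoc, Rinv_l by lra. lra.
Qed.

Lemma div_le A B C : 0 < B -> A <= C * B -> A / B <= C.
Proof. intros HB H. apply Rle_div_l; lra. Qed.

Lemma invpow_pos r k : 1 < r -> 0 < (/ r) ^ k.
Proof. intro. apply pow_lt, Rinv_0_lt_compat; lra. Qed.

Lemma main_anal (F : C -> Prop) (r K1 : R) (M : nat -> nat) :
  1 < r -> 1 <= K1 -> (forall k, (1 <= M k)%nat) ->
  (forall k, ln (INR (M k)) <= 2 * (INR k * ln r)) ->
  (forall k, covers_with (M k) (K1 * (/ r) ^ k) F) ->
  (forall k m delta, delta < (/ r) ^ k -> covers_with m delta F -> (M k <= m)%nat) ->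
  lower_box_dim F = LimInf_seq (fun k => ln (INR (M k)) / (INR k * ln r)).
Proof.
  intros Hr HK HM1 HM2 Hup Hlow.
  assert (Hlam : 0 < ln r) by (rewrite <- ln_1; apply ln_increasing; lra).
  set (lam := ln r) in *.
  set (u := fun k => ln (INR (M k)) / (INR k * lam)).
  assert (HlnM : forall k, 0 <= ln (INR (M k))).
  { intro k. rewrite <- ln_1. apply ln_le'. lra. apply (le_INR 1), HM1. }
  assert (Hu : forall k, 0 <= u k <= 2).
  { intro k. unfold u. destruct k as [|k].
    - simpl. rewrite Rmult_0_l. unfold Rdiv. rewrite Rinv_0, Rmult_0_r. lra.
    - assert (0 < INR (S k)) by apply lt_0_INR, Nat.lt_0_succ.
      split. apply Rdiv_le_0_compat; auto. apply Rmult_lt_0_compat; lra.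
      apply div_le. apply Rmult_lt_0_compat; lra. apply HM2. }
  assert (HuE : forall k, (1 <= k)%nat -> ln (INR (M k)) = u k * (INR k * lam)).
  { intros k Hk. unfold u. field. split; [lra|]. apply not_0_INR. lia. }
  change (lower_box_dim F = LimInf_seq u).
  unfold LimInf_seq. destruct (ex_LimInf_seq u) as [l Hl]. simpl.
  destruct l as [L| |].
  2:{ exfalso. destruct (Hl 3) as [N HN]. specialize (HN N (le_n N)). specialize (Hu N). lra. }
  2:{ exfalso. destruct (Hl (-1) 0%nat) as [k [_ Hk]]. specialize (Hu k). lra. }
  unfold lower_box_dim. apply Rbar_is_lub_unique. split.
  -
    intros y [eps [Heps ->]].
    unfold Rbar_glb. destruct (Rbar_ex_glb _) as [g [Hlb Hglb]]. simpl.
    assert (Claim : forall e, 0 < e -> exists x, x <= L + e /\ Rbar_le g (Finite x)).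
    { intros e He.
      set (c0 := ln K1).
      assert (Hc0 : 0 <= c0) by (unfold c0; rewrite <- ln_1; apply ln_le'; lra).
      assert (Hle : 0 <= - ln eps).
      { pose proof (ln_le' eps 1 (proj1 Heps) (proj2 Heps)) as Hq. rewrite ln_1 in Hq. lra. }
      destruct (exists_nat_gt ((c0 + - ln eps + 4 * c0 / e + 1) / lam)) as [N0 HN0].
      assert (He2 : 0 < e / 2) by lra.
      destruct (proj1 (Hl (mkposreal _ He2)) N0) as [k [Hk Huk]]. simpl in Huk.
      assert (HkN : INR N0 <= INR k) by (apply le_INR; auto).
      assert (Hc4 : 0 <= 4 * c0 / e) by (apply Rdiv_le_0_compat; lra).
      assert (Hklam : c0 + - ln eps + 4 * c0 / e + 1 < INR k * lam).
      { apply (Rmult_lt_compat_r lam) in HN0; auto. unfold Rdiv in HN0.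
        rewrite Rmult_assoc, Rinv_l in HN0 by lra. nra. }
      assert (Hk1 : (1 <= k)%nat).
      { destruct k; [|lia]. simpl in Hklam. lra. }
      set (delta := K1 * (/ r) ^ k).
      assert (Hdpos : 0 < delta) by (unfold delta; apply Rmult_lt_0_compat; [lra|apply invpow_pos; auto]).
      assert (Hlnd : ln delta = c0 - INR k * lam).
      { unfold delta. rewrite ln_mult by (try apply invpow_pos; lra). rewrite ln_invpow by auto. unfold c0, lam. ring. }
      assert (Hdeps : delta < eps) by (apply ln_lt_inv; auto; lra).
      destruct (CN F r K1 M Hr HK Hup Hlow delta ltac:(lra)) as [N [HN [HN1 HN2]]].
      exists (ln N / (- ln delta)). split.
      + assert (HN0' : INR (M 0%nat) <= N) by (apply HN1; simpl; lra).
        assert (HM0 : 1 <= INR (M 0%nat)) by (apply (le_INR 1), HM1).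
        assert (HNk : N <= INR (M k)) by (apply HN2, Hup).
        assert (HlnN : ln N <= ln (INR (M k))) by (apply ln_le'; lra).
        assert (HlnN0 : 0 <= ln N) by (rewrite <- ln_1; apply ln_le'; lra).
        rewrite (HuE k Hk1) in HlnN. specialize (Hu k).
        apply div_le. lra.
        assert (Hc0e : c0 * 4 <= e * (INR k * lam - c0)).
        { assert (4 * c0 / e * e = 4 * c0) by (field; lra). nra. }
        rewrite Hlnd. nra.
      + apply Hlb. exists delta. split; [lra|]. unfold box_ratio. rewrite HN. reflexivity. }
    destruct g as [g| |]; simpl; auto.
    + apply le_eps. intros e He. destruct (Claim (e/2) ltac:(lra)) as [x [Hx1 Hx2]]. simpl in Hx2. lra.
    + destruct (Claim 1 ltac:(lra)) as [x [_ Hx]]. simpl in Hx. auto.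
  -
    intros b Hb.
    assert (Claim : forall e, 0 < e -> Rbar_le (Finite (L - e)) b).
    { intros e He.
      assert (He2 : 0 < e / 2) by lra.
      destruct (proj2 (Hl (mkposreal _ He2))) as [N1 HN1]. simpl in HN1.
      destruct (exists_nat_gt (8 / e)) as [K2 HK2].
      set (K := Nat.max N1 K2).
      set (eps := (/ r) ^ (K + 2)).
      assert (Heps0 : 0 < eps) by (apply invpow_pos; auto).
      assert (Hlneps : ln eps = - (INR (K + 2) * lam)) by (apply ln_invpow; auto).
      assert (HKpos : 0 <= INR K) by apply pos_INR.
      assert (Heps1 : eps <= 1).
      { apply ln_le_inv; auto; try lra. rewrite ln_1, Hlneps, plus_INR. simpl. nra. }
      eapply Rbar_le_trans; [|apply Hb; exists eps; split; [split; auto|reflexivity]].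
      unfold Rbar_glb. destruct (Rbar_ex_glb _) as [g [Hlb Hglb]].
      apply Hglb. intros x [delta [Hd ->]].
      assert (Hd1 : 0 < delta < 1) by lra.
      destruct (CN F r K1 M Hr HK Hup Hlow delta Hd1) as [N [HN [HC1 HC2]]].
      unfold box_ratio. rewrite HN. simpl.
      assert (Hlnd : ln delta < ln eps) by (apply ln_increasing; lra).
      set (t := - ln delta / lam).
      assert (Ht : - ln delta = t * lam) by (unfold t; field; lra).
      assert (HtK : INR (K + 2) < t).
      { apply (Rmult_lt_reg_r lam); auto. lra. }
      destruct (archimed t) as [Hz1 Hz2].
      set (z := up t) in *.
      assert (HzK : (Z.of_nat (K + 2) < z)%Z).
      { apply lt_IZR. rewrite <- INR_IZR_INZ. lra. }
      set (k := Z.to_nat (z - 2)).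
      assert (Hk : INR k = IZR z - 2).
      { unfold k. rewrite INR_IZR_INZ, Z2Nat.id by lia. rewrite minus_IZR. reflexivity. }
      assert (HkK : (K + 1 <= k)%nat) by (unfold k; lia).
      assert (Hk1 : (1 <= k)%nat) by lia.
      assert (HkN1 : (N1 <= k)%nat) by (unfold K in HkK; lia).
      assert (HkK2 : INR K2 <= INR k) by (apply le_INR; unfold K in HkK; lia).
      assert (Hdk : delta < (/ r) ^ k).
      { apply ln_lt_inv; auto. lra. apply invpow_pos; auto. rewrite ln_invpow by auto. fold lam. nra. }
      assert (HMN : INR (M k) <= N) by (apply HC1; auto).
      assert (HM1k : 1 <= INR (M k)) by (apply (le_INR 1), HM1).
      assert (HlnN : ln (INR (M k)) <= ln N) by (apply ln_le'; lra).
      assert (HlnN0 : 0 <= ln N) by (pose proof (HlnM k); lra).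
      rewrite (HuE k Hk1) in HlnN.
      specialize (Hu k).
      assert (Huk : L - e / 2 < u k) by (apply HN1; auto).
      assert (Htpos : 0 < t * lam) by (pose proof (pos_INR (K + 2)); nra).
      apply div_ge. lra.
      rewrite Ht.
      destruct (Rle_lt_dec (L - e) 0) as [Hneg|Hpos].
      + nra.
      + assert (Hke : 8 <= INR k * e).
        { assert (8 / e * e = 8) by (field; lra). nra. }
        assert (Htk : t < INR k + 2) by lra.
        assert (Hmain : (L - e) * (INR k + 2) <= u k * INR k) by nra.
        assert (H3 : (L - e) * t * lam <= (L - e) * (INR k + 2) * lam).
        { apply Rmult_le_compat_r; [lra|]. apply Rmult_le_compat_l; lra. }
        assert (H4 : u k * INR k * lam <= ln N) by (rewrite Rmult_assoc; lra).
        assert (H5 : (L - e) * (INR k + 2) * lam <= u k * INR k * lam) by (apply Rmult_le_compat_r; lra).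
        rewrite <- Rmult_assoc. lra. }
    destruct b as [b| |]; simpl; auto.
    + apply le_eps. intros e He. specialize (Claim (e/2) ltac:(lra)). simpl in Claim. lra.
    + specialize (Claim 1 ltac:(lra)). simpl in Claim. auto.
Qed.

Lemma Mk_ge1 n D a : (forall d, D d = true -> (d <= n * n)%nat) ->
  (forall j, (1 <= j)%nat -> in_Delta D (a j)) -> forall k, (1 <= Mk n D a k)%nat.
Proof.
  intros HD Ha. induction k as [|k IH]; simpl; auto.
  assert (H : (1 <= card_shift n D (a (S k)))%nat).
  { rewrite El_card. pose proof (estar_in n D a HD Ha (S k) ltac:(lia)) as Hin.
    destruct (El n D a (S k)); simpl in *; [destruct Hin|lia]. }
  nia.
Qed.

Lemma Mk_le n D a k : (Mk n D a k <= (n * n + 1) ^ k)%nat.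
Proof.
  induction k as [|k IH]; simpl; auto.
  assert (H : (card_shift n D (a (S k)) <= n * n + 1)%nat).
  { rewrite El_card. unfold El. rewrite <- (length_seq (n * n + 1) 0) at 2. apply filter_length_le. }
  rewrite Nat.mul_comm. apply Nat.mul_le_mono; auto.
Qed.

Theorem theorem4p9 (n : nat) (D : nat -> bool) (alpha : C) (a : nat -> Z) :
  (2 <= n)%nat ->
  (forall d, D d = true -> (d <= n * n)%nat) ->
  sparse n D ->
  (forall j, (1 <= j)%nat -> in_Delta D (a j)) ->
  expansion n a alpha ->
  lower_box_dim (fun z => CnD n D z /\ CnD n D (Cminus z alpha)) =
  LimInf_seq (fun k => ln (INR (Mk n D a k)) / (INR k * ln (Cmod (base n)))).
Proof.
  intros Hn HD Hsp Ha Halpha.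
  pose proof (r_ge2 n Hn) as Hr.
  assert (HN : 2 <= INR n) by (apply (le_INR 2) in Hn; simpl in Hn; lra).
  apply (main_anal _ (Cmod (base n)) (2 * (INR n * INR n)) (Mk n D a)).
  - lra.
  - nra.
  - apply Mk_ge1; auto.
  - intro k.
    assert (Hr2 : Cmod (base n) * Cmod (base n) = INR n * INR n + 1).
    { unfold Cmod, base. simpl. rewrite sqrt_sqrt by nra. ring. }
    assert (H1 : 0 < INR (Mk n D a k)) by (apply lt_0_INR; pose proof (Mk_ge1 n D a HD Ha k); lia).
    eapply Rle_trans. apply ln_le'. exact H1. apply le_INR, (Mk_le n D a k).
    rewrite pow_INR, plus_INR, mult_INR, ln_pow by (simpl; nra).
    simpl (INR 1). rewrite <- Hr2, ln_mult by lra. lra.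
  - intro k. pose proof (upper_cover n D a alpha Hn HD Hsp Ha Halpha k) as H.
    eapply covers_mono; [|exact H]. lra.
  - intros k m delta Hd Hc. eapply lower_count; eauto.
Qed.
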